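(* Let $(x^k)_{k\in\mathcal{K}}\in\mathcal{X}=\prod_{k\in\mathcal{K}}\mathcal{X}^k$. The following statements are equivalent: (a) $(x^k)$ is bilevel feasible; (b) $\sum_{k\in\mathcal{K}}c^\top x^k=g\bigl(\sum_{k\in\mathcal{K}}x^k_{\mathcal{A}_1}\bigr)$; (c) each $x^k$ is individually bilevel feasible, and $g\bigl(\sum_{k\in\mathcal{K}}x^k_{\mathcal{A}_1}\bigr)=\sum_{k\in\mathcal{K}}g^k(x^k_{\mathcal{A}_1})$; (d) there exists $t\ge0$ such that $f(t)=\sum_{k\in\mathcal{K}}\bigl(c^\top x^k+t^\top x^k_{\mathcal{A}_1}\bigr)$; (e) there exists $t\ge0$ such that $f^k(t)=c^\top x^k+t^\top x^k_{\mathcal{A}_1}$ for all $k\in\mathcal{K}$.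
   Context: Multi-commodity network pricing setting: $G=(\mathcal{V},\mathcal{A})$ directed graph with arc costs $c\ge0$, nonempty tolled arc set $\mathcal{A}_1\subsetneq\mathcal{A}$, $n=|\mathcal{A}_1|$, $N$ node–arc incidence matrix; finite set $\mathcal{K}$ of commodities, commodity $k$ having origin $o^k$ and destination $d^k$ connected by a path of arcs not in $\mathcal{A}_1$; $b^k_{o^k}=1$, $b^k_{d^k}=-1$, other entries $0$; $\mathcal{X}^k=\{x\in\mathbb{R}^{\mathcal{A}}: Nx=b^k,\ x\ge0\}$; $x_{\mathcal{A}_1}$ is the restriction of $x$ to $\mathcal{A}_1$. For $t\in\mathbb{R}^n$ let $f^k(t)=\min\{c^\top x+t^\top x_{\mathcal{A}_1}: x\in\mathcal{X}^k\}$ if $t\ge0$ and $f^k(t)=-\infty$ otherwise; $f=\sum_{k\in\mathcal{K}}f^k$; $g^k(w)=\sup_{t\in\mathbb{R}^n}\{f^k(t)-t^\top w\}$ and $g(w)=\sup_{t\in\mathbb{R}^n}\{f(t)-t^\top w\}$. A composed reaction $(x^k)\in\mathcal{X}$ is bilevel feasible when $\sum_k c^\top x^k=g(\sum_k x^k_{\mathcal{A}_1})$. A single $x^k\in\mathcal{X}^k$ is individually bilevel feasible when the hyperplane $\{(t,z): z=-c^\top x^k-t^\top x^k_{\mathcal{A}_1}\}$ supports $\operatorname{epi}(-f^k)$ (i.e. $\operatorname{epi}(-f^k)$ lies in $\{z\ge -c^\top x^k-t^\top x^k_{\mathcal{A}_1}\}$ and meets the hyperplane). *)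

(* Defs.v *)
From HB Require Import structures.
From mathcomp Require Import all_boot all_order all_algebra.
From mathcomp Require Import all_classical all_reals ereal.
Set Implicit Arguments. Unset Strict Implicit. Unset Printing Implicit Defensive.
Import Order.TTheory GRing.Theory Num.Theory.
Local Open Scope classical_set_scope.
Local Open Scope ring_scope.

Section NetworkPricing.
Variables (R : realType) (V A K : finType).
Variables (tail head : A -> V) (c : A -> R) (A1 : {set A}).
Variables (o d : K -> V).

(* the index set of tolled arcs; R^n with n = |A1| is modelled as tolled -> R *)
Definition tolled := {a : A | a \in A1}.

Fixpoint walk (u : V) (p : seq A) (v : V) : bool :=
  if p is a :: p' then (tail a == u) && walk (head a) p' v else u == v.

Definition incidence (v : V) (a : A) : R :=
  (tail a == v)%:R - (head a == v)%:R.

Definition Nmul (x : A -> R) (v : V) : R := \sum_(a : A) incidence v a * x a.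

Definition bvec (k : K) (v : V) : R := (v == o k)%:R - (v == d k)%:R.

Definition Xk (k : K) : set (A -> R) :=
  [set x | (forall v, Nmul x v = bvec k v) /\ (forall a, 0 <= x a)].

Definition restrA1 (x : A -> R) : tolled -> R := fun a => x (val a).

Definition dot (t w : tolled -> R) : R := \sum_(i : tolled) t i * w i.

Definition cost (x : A -> R) : R := \sum_(a : A) c a * x a.

Definition nonneg (t : tolled -> R) : bool := [forall i, 0 <= t i].

Definition fk (k : K) (t : tolled -> R) : \bar R :=
  if nonneg t then
    ereal_inf [set ((cost x + dot t (restrA1 x))%:E) | x in Xk k]
  else -oo%E.

Definition f (t : tolled -> R) : \bar R := (\sum_(k : K) fk k t)%E.

Definition gk (k : K) (w : tolled -> R) : \bar R :=
  ereal_sup [set (fk k t - (dot t w)%:E)%E | t in [set: tolled -> R]].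

Definition g (w : tolled -> R) : \bar R :=
  ereal_sup [set (f t - (dot t w)%:E)%E | t in [set: tolled -> R]].

Definition sum_restr (xs : K -> A -> R) : tolled -> R :=
  fun i => \sum_(k : K) restrA1 (xs k) i.

Definition bilevel_feasible (xs : K -> A -> R) : Prop :=
  ((\sum_(k : K) cost (xs k))%:E = g (sum_restr xs))%E.

Definition epi_neg_fk (k : K) : set ((tolled -> R) * R) :=
  [set tz | (- fk k tz.1 <= tz.2%:E)%E].

(* the hyperplane {(t,z) : z = -c^T x - t^T x_{A1}} supports epi(-f^k) *)
Definition indiv_bilevel_feasible (k : K) (x : A -> R) : Prop :=
  (forall tz, epi_neg_fk k tz -> - cost x - dot tz.1 (restrA1 x) <= tz.2) /\
  (exists tz, epi_neg_fk k tz /\ tz.2 = - cost x - dot tz.1 (restrA1 x)).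

End NetworkPricing.

(* Main.v *)
Require Import Defs.
From HB Require Import structures.
From mathcomp Require Import all_boot all_order all_algebra.
From mathcomp Require Import all_classical all_reals ereal.
From mathcomp Require Import lra ring.
Import Order.TTheory GRing.Theory Num.Theory.
Local Open Scope classical_set_scope.
Local Open Scope ring_scope.

Local Close Scope classical_set_scope.
Section FM.
Variable R : realFieldType.

Lemma sep (Ls Us : seq R) : (forall l u, l \in Ls -> u \in Us -> l <= u) ->
  exists s, (forall l, l \in Ls -> l <= s) /\ (forall u, u \in Us -> s <= u).
Proof.
elim: Ls => [|l Ls IH] H.
  elim: Us {H} => [|u Us IH]; first by exists 0.
  case: IH => s [_ Hs]; exists (Num.min s u); split => // v.
  rewrite inE => /orP[/eqP->|/Hs hv]; rewrite ge_min ?lexx ?hv ?orbT //.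
case: IH => [l' u Hl Hu|s [H1 H2]]; first by apply: H => //; rewrite inE Hl orbT.
exists (Num.max l s); split => [v|u Hu].
  rewrite inE => /orP[/eqP->|/H1 hv]; rewrite le_max ?lexx ?hv ?orbT //.
by rewrite ge_max H2 // H // mem_head.
Qed.

Definition C n := (R * {ffun 'I_n -> R} * R)%type.

Definition sat n (S : seq (C n)) (z : R) (y : 'I_n -> R) :=
  forall p, p \in S -> p.1.1 * z + \sum_i p.1.2 i * y i <= p.2.
Arguments sat {n}.

Section Elim.
Variable n : nat.
Implicit Types (p q : C n.+1).
Definition gam p : R := p.1.2 ord_max.
Definition bet p : {ffun 'I_n -> R} := [ffun j => p.1.2 (widen_ord (leqnSn n) j)].
Definition comb p q : C n :=
  (- gam q * p.1.1 + gam p * q.1.1,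
   [ffun j => - gam q * bet p j + gam p * bet q j],
   - gam q * p.2 + gam p * q.2).
Definition elimS (S : seq (C n.+1)) : seq (C n) :=
  [seq (p.1.1, bet p, p.2) | p <- S & gam p == 0] ++
  [seq comb p q | p <- [seq p <- S | 0 < gam p], q <- [seq q <- S | gam q < 0]].

Definition Lf p z (y : 'I_n -> R) := p.1.1 * z + \sum_j bet p j * y j.

Lemma Lf_comb p q z y : (comb p q).1.1 * z + \sum_j (comb p q).1.2 j * y j
   = - gam q * Lf p z y + gam p * Lf q z y.
Proof.
rewrite /Lf /comb /=.
have -> : \sum_j [ffun j => - gam q * bet p j + gam p * bet q j] j * y j =
   - gam q * (\sum_j bet p j * y j) + gam p * (\sum_j bet q j * y j).
  rewrite !mulr_sumr -big_split /=; apply: eq_bigr => j _.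
  by rewrite ffunE mulrDl !mulrA.
ring.
Qed.

Lemma elimP (S : seq (C n.+1)) z y :
  (exists s, forall p, p \in S -> Lf p z y + gam p * s <= p.2) <-> sat (elimS S) z y.
Proof.
split.
  case=> s Hs p; rewrite mem_cat => /orP[].
    case/mapP => p0; rewrite mem_filter => /andP[/eqP g0 p0S] ->{p} /=.
    by have := Hs _ p0S; rewrite g0 mul0r addr0.
  case/allpairsP => [[p0 q0] /= [p0S q0S ->]].
  move: p0S q0S; rewrite !mem_filter => /andP[gp p0S] /andP[gq q0S].
  rewrite Lf_comb.
  have h1 := Hs _ p0S; have h2 := Hs _ q0S.
  have e1 : 0 <= - gam q0 by rewrite oppr_ge0 ltW.
  have e2 : 0 <= gam p0 by rewrite ltW.
  have := ler_wpM2l e1 h1; have := ler_wpM2l e2 h2.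
  set a := Lf p0 z y; set b := Lf q0 z y; set gp' := gam p0; set gq' := gam q0.
  move=> H1 H2 /=. rewrite -/gp' -/gq'.
  have := lerD H1 H2.
  have -> : gp' * (b + gq' * s) + - gq' * (a + gp' * s) = - gq' * a + gp' * b by ring.
  by move=> h; apply: (le_trans h); rewrite addrC.
move=> H.
pose Ls := [seq (q.2 - Lf q z y) / gam q | q <- [seq q <- S | gam q < 0]].
pose Us := [seq (p.2 - Lf p z y) / gam p | p <- [seq p <- S | 0 < gam p]].
have [s [Hl Hu]] : exists s, (forall l, l \in Ls -> l <= s) /\ (forall u, u \in Us -> s <= u).
  apply: sep => l u /mapP[q qS ->] /mapP[p pS ->].
  rewrite !mem_filter in qS pS; case/andP: qS => gq qS; case/andP: pS => gp pS.
  have := H (comb p q); rewrite Lf_comb mem_cat.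
  have -> : comb p q \in [seq comb p q | p <- [seq p <- S | 0 < gam p], q <- [seq q <- S | gam q < 0]].
    by apply/allpairsP; exists (p, q); rewrite /= !mem_filter gp gq pS qS.
  rewrite orbT => /(_ isT) /= h.
  rewrite ler_ndivrMr // mulrAC ler_pdivrMr //.
  set a := Lf p z y in h *; set b := Lf q z y in h *.
  nra.
exists s => p pS.
case: (ltgtP (gam p) 0) => g.
- have := Hl ((p.2 - Lf p z y) / gam p).
  rewrite ler_ndivrMr // => /(_ (map_f _ _)).
  rewrite mem_filter g pS => /(_ isT); rewrite mulrC; lra.
- have := Hu ((p.2 - Lf p z y) / gam p).
  rewrite ler_pdivlMr // => /(_ (map_f _ _)).
  rewrite mem_filter g pS => /(_ isT); rewrite mulrC; lra.
- rewrite g mul0r addr0.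
  apply: (H (p.1.1, bet p, p.2)); rewrite mem_cat; apply/orP; left.
  by apply/mapP; exists p => //; rewrite mem_filter g eqxx.
Qed.
Lemma split_sum p z (y : 'I_n.+1 -> R) :
  p.1.1 * z + \sum_i p.1.2 i * y i =
  Lf p z (fun j => y (widen_ord (leqnSn n) j)) + gam p * y ord_max.
Proof.
rewrite big_ord_recr /= /Lf addrA; congr (_ + _ + _).
by apply: eq_bigr => j _; rewrite ffunE.
Qed.

Definition ext (y : 'I_n -> R) (s : R) : 'I_n.+1 -> R :=
  fun i => oapp y s (insub (val i)).

Lemma ext_widen y s j : ext y s (widen_ord (leqnSn n) j) = y j.
Proof. by rewrite /ext /= valK. Qed.

Lemma ext_max y s : ext y s ord_max = s.
Proof. by rewrite /ext /= insubF // ltnn. Qed.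
End Elim.
Arguments elimS {n}. Arguments ext {n}. Arguments elimP {n}. Arguments split_sum {n}.
Arguments ext_widen {n}. Arguments ext_max {n}. Arguments gam {n}. Arguments Lf {n}.

Lemma FM {n} (S : seq (C n)) : exists S' : seq (R * R), forall z,
  (exists y, sat S z y) <-> (forall q, q \in S' -> q.1 * z <= q.2).
Proof.
elim: n S => [|n IH] S.
  exists [seq (p.1.1, p.2) | p <- S] => z; split.
    case=> y Hy q /mapP[p pS ->] /=.
    by have := Hy _ pS; rewrite big_ord0 addr0.
  move=> H; exists (fun _ => 0) => p pS; rewrite big_ord0 addr0.
  by apply: (H (p.1.1, p.2)); apply: map_f.
case: (IH (elimS S)) => S' HS'; exists S' => z; rewrite -HS'; split.
  case=> y Hy; exists (fun j => y (widen_ord (leqnSn n) j)); apply/elimP.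
  by exists (y ord_max) => p pS; rewrite -split_sum; apply: Hy.
case=> y' /elimP[s Hs]; exists (ext y' s) => p pS.
rewrite split_sum ext_max.
have -> : Lf p z (fun j => ext y' s (widen_ord (leqnSn n) j)) = Lf p z y'.
  by rewrite /Lf; congr (_ + _); apply: eq_bigr => j _; rewrite ext_widen.
exact: Hs.
Qed.

Lemma attain n (S : seq (C n)) (M : R) :
  (forall z y, sat S z y -> z <= M) ->
  (forall e, 0 < e -> exists z y, sat S z y /\ M - e < z) ->
  exists y, sat S M y.
Proof.
move=> Hub Happ; case: (FM S) => S' HS'; apply/HS' => q qS.
have [z0 [y0 [s0 _]]] := Happ 1 ltr01.
have z0M := Hub _ _ s0.
have Hz0 : q.1 * z0 <= q.2 by move: q qS; apply/HS'; exists y0.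
case: (lerP q.1 0) => hq.
  by apply: le_trans Hz0; rewrite ler_wnM2l.
rewrite leNgt; apply/negP => Hlt.
have ep : 0 < (q.1 * M - q.2) / q.1 by rewrite divr_gt0 // subr_gt0.
have [z [y [sy Hz]]] := Happ _ ep.
have : q.1 * z <= q.2 by move: q qS {Hz0 Hlt ep Hz hq}; apply/HS'; exists y.
have : q.1 * (M - (q.1 * M - q.2) / q.1) < q.1 * z by rewrite ltr_pM2l.
rewrite mulrBr mulrCA divff ?gt_eqF // mulr1.
lra.
Qed.


Section AttainJ.
Variables (T J : finType) (al : J -> R) (B : J -> T -> R) (b : J -> R).
Definition satJ z (Y : T -> R) := forall j, al j * z + \sum_u B j u * Y u <= b j.

Let SJ : seq (C #|T|) := [seq (al j, [ffun i => B j (enum_val i)], b j) | j <- enum J].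

Let sumE j (y : 'I_#|T| -> R) :
  \sum_i [ffun i => B j (enum_val i)] i * y i = \sum_u B j u * y (enum_rank u).
Proof.
rewrite (reindex (@enum_val T T)) /=; last first.
  by exists enum_rank => x _; rewrite ?enum_valK ?enum_rankK.
by apply: eq_bigr => i _; rewrite ffunE enum_valK.
Qed.

Let satE z y : sat SJ z y <-> satJ z (fun u => y (enum_rank u)).
Proof.
split.
  move=> H j; rewrite -sumE; apply: (H (al j, _, b j)).
  by apply: map_f; rewrite mem_enum.
move=> H p /mapP[j _ ->] /=; rewrite sumE; exact: H.
Qed.

Lemma attainJ (M : R) :
  (forall z Y, satJ z Y -> z <= M) ->
  (forall e, 0 < e -> exists z Y, satJ z Y /\ M - e < z) ->
  exists Y, satJ M Y.
Proof.
move=> Hub Happ.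
have [y Hy] : exists y, sat SJ M y.
  apply: attain.
    by move=> z y /satE; apply: Hub.
  move=> e /Happ [z [Y [HY Hz]]]; exists z, (fun i => Y (enum_val i)); split => //.
  apply/satE => j; have := HY j.
  suff -> : \sum_u B j u * Y (enum_val (enum_rank u)) = \sum_u B j u * Y u by [].
  by apply: eq_bigr => u _; rewrite enum_rankK.
by exists (fun u => y (enum_rank u)); apply/satE.
Qed.
End AttainJ.
End FM.

Local Open Scope classical_set_scope.
Lemma sum_delta {R : realType} {T : finType} (u0 : T) (F : T -> R) :
  \sum_u (u == u0)%:R * F u = F u0.
Proof.
rewrite (bigD1 u0) //= eqxx mul1r big1 ?addr0 // => u /negbTE ->.
by rewrite mul0r.
Qed.

Section Net.
Variables (R : realType) (V A K : finType) (tail head : A -> V) (c : A -> R)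
  (A1 : {set A}) (o d : K -> V).
Hypothesis Hc : forall a, 0 <= c a.

Local Notation fk := (@fk R V A K tail head c A1 o d).
Local Notation f := (@f R V A K tail head c A1 o d).
Local Notation Xk := (@Xk R V A K tail head o d).
Local Notation Nmul := (@Nmul R V A tail head).
Local Notation cost := (@cost R A c).
Local Notation dot := (@dot R A A1).
Local Notation restr := (@restrA1 R A A1).
Local Notation tolled := (tolled A1).
Local Notation inc := (@incidence R V A tail head).

Definition ttil (t : tolled -> R) (a : A) : R := \sum_i (val i == a)%:R * t i.
Definition ell t a := c a + ttil t a.

Lemma costdot t x : cost x + dot t (restr x) = \sum_a ell t a * x a.
Proof.
rewrite /cost /dot /ell /restrA1.
under [X in _ = X]eq_bigr => a _ do rewrite mulrDl.
rewrite big_split /=; congr (_ + _).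
rewrite /ttil; under [X in _ = X]eq_bigr => a _ do rewrite mulr_suml.
rewrite exchange_big /=; apply: eq_bigr => i _.
rewrite -(sum_delta (val i) (fun a => t i * x a)) /=.
by apply: eq_bigr => a _; rewrite eq_sym mulrA [_ * t i]mulrC.
Qed.

Lemma flow_pot (x : A -> R) (s e : V) (pi : V -> R) :
  (forall u, Nmul x u = (u == s)%:R - (u == e)%:R) ->
  \sum_a x a * (pi (tail a) - pi (head a)) = pi s - pi e.
Proof.
move=> H.
have : \sum_v pi v * Nmul x v = \sum_v pi v * ((v == s)%:R - (v == e)%:R).
  by apply: eq_bigr => v _; rewrite H.
rewrite /Nmul.
under [X in X = _ -> _]eq_bigr => v _ do rewrite mulr_sumr.
rewrite exchange_big /=.
under [X in _ = X -> _]eq_bigr => v _ do rewrite mulrBr.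
rewrite sumrB.
rewrite -(sum_delta s pi) -(sum_delta e pi).
have E1 : forall w, \sum_v pi v * (v == w)%:R = \sum_v (v == w)%:R * pi v.
  by move=> w; apply: eq_bigr => v _; rewrite mulrC.
rewrite !E1 => <-.
apply: eq_bigr => a _; rewrite /incidence.
rewrite -(sum_delta (tail a) pi) -(sum_delta (head a) pi) -sumrB mulr_sumr.
apply: eq_bigr => v _; rewrite !(eq_sym v); ring.
Qed.

Lemma fk_ub k t x : Xk k x -> (fk k t <= (cost x + dot t (restr x))%:E)%E.
Proof.
move=> Hx; rewrite /Defs.fk; case: ifP => _; last exact: leNye.
by apply: ereal_inf_lbound; exists x.
Qed.

Lemma ell_ge0 t : nonneg t -> forall a, 0 <= ell t a.
Proof.
move=> /forallP Ht a; rewrite /ell /ttil addr_ge0 // sumr_ge0 // => i _.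
by rewrite mulr_ge0 ?ler0n.
Qed.

Lemma fk_fin k t x : nonneg t -> Xk k x -> exists r, fk k t = r%:E /\ 0 <= r.
Proof.
move=> Ht Hx; have ub := @fk_ub k t x Hx.
have lb : (0%:E <= fk k t)%E.
  rewrite /Defs.fk Ht; apply: le_ereal_inf_tmp => _ [y [Hy1 Hy2] <-].
  rewrite costdot lee_fin sumr_ge0 // => a _; rewrite mulr_ge0 // ell_ge0 //.
move: ub lb; case: (fk k t) => [r| |] //= _; rewrite ?lee_fin => r0.
by exists r.
Qed.

Lemma fk_pot k t (pi : V -> R) : nonneg t ->
  (forall a, pi (head a) - pi (tail a) <= ell t a) ->
  ((pi (d k) - pi (o k))%:E <= fk k t)%E.
Proof.
move=> Ht Hp; rewrite /Defs.fk Ht; apply: le_ereal_inf_tmp => _ [x [Hx1 Hx2] <-].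
rewrite lee_fin costdot.
have := @flow_pot x (o k) (d k) pi Hx1.
move/(congr1 (fun r => - r)); rewrite opprB => <-.
rewrite -sumrN; apply: ler_sum => a _.
by rewrite -mulrN opprB mulrC ler_wpM2r.
Qed.

Lemma pot_exists k t D : nonneg t -> fk k t = D%:E -> 0 <= D ->
  exists pi : V -> R, (forall a, pi (head a) - pi (tail a) <= ell t a) /\
    D <= pi (d k) - pi (o k).
Proof.
move=> Ht HD D0.
pose Fl v := [set x : A -> R | (forall u, Nmul x u = (u == o k)%:R - (u == v)%:R) /\
   (forall a, 0 <= x a)].
pose E v := [set r : R | r = D \/ exists2 x, Fl v x & r = \sum_a ell t a * x a].
pose pi v := inf (E v).
have Ene v : E v !=set0 by exists D; left.
have Elb v : has_lbound (E v).
  exists 0 => r [->|[x [_ Hx] ->]] //.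
  by rewrite sumr_ge0 // => a _; rewrite mulr_ge0 // ell_ge0.
have piD v : pi v <= D by rewrite /pi; apply: (ge_inf (Elb v)); left.
exists pi; split.
  move=> a; suff : pi (head a) - ell t a <= pi (tail a) by lra.
  apply: lb_le_inf (Ene _) _ => r [->|[x [Hx1 Hx2] ->]].
    by have := piD (head a); have := @ell_ge0 t Ht a; lra.
  pose x' := fun b => x b + (b == a)%:R.
  have Hx' : E (head a) (\sum_b ell t b * x' b).
    right; exists x' => //; split => [u|b]; last by rewrite addr_ge0.
    rewrite /Nmul /x'; under eq_bigr => b _ do rewrite mulrDr.
    rewrite big_split /=.
    have -> : \sum_b inc u b * (b == a)%:R = inc u a.
      by rewrite -(sum_delta a (inc u)); apply: eq_bigr => b _; rewrite mulrC.
    have := Hx1 u; rewrite /Nmul => ->; rewrite /incidence !(eq_sym (tail a)) !(eq_sym (head a)).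
    ring.
  have := ge_inf (Elb (head a)) Hx'; rewrite -/(pi (head a)).
  have -> : \sum_b ell t b * x' b = \sum_b ell t b * x b + ell t a.
    rewrite /x'; under eq_bigr => b _ do rewrite mulrDr.
    rewrite big_split /=; congr (_ + _).
    by rewrite -(sum_delta a (ell t)); apply: eq_bigr => b _; rewrite mulrC.
  lra.
have : pi (o k) <= 0.
  rewrite /pi; apply: (ge_inf (Elb (o k))); right; exists (fun _ => 0).
    split => // u; rewrite subrr /Nmul big1 // => a _; by rewrite mulr0.
  by rewrite big1 // => a _; rewrite mulr0.
have : D <= pi (d k).
  apply: lb_le_inf (Ene _) _ => r [->|[x [Hx1 Hx2] ->]] //.
  have := @fk_ub k t x (conj Hx1 Hx2); rewrite HD costdot lee_fin //.
lra.
Qed.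

Local Notation g := (@g R V A K tail head c A1 o d).
Local Notation gk := (@gk R V A K tail head c A1 o d).
Local Notation sum_restr := (@sum_restr R A K A1).

Lemma dot_sum t (xs : K -> A -> R) :
  \sum_k dot t (restr (xs k)) = dot t (sum_restr xs).
Proof.
rewrite /dot /sum_restr exchange_big /=; apply: eq_bigr => i _.
by rewrite mulr_sumr.
Qed.

Lemma f_ub t (xs : K -> A -> R) : (forall k, Xk k (xs k)) ->
  (f t <= (\sum_k (cost (xs k) + dot t (restr (xs k))))%:E)%E.
Proof.
move=> Hxs; rewrite /Defs.f -sumEFin; apply: lee_sum => k _; exact: fk_ub.
Qed.

Lemma g_ub (xs : K -> A -> R) : (forall k, Xk k (xs k)) ->
  (g (sum_restr xs) <= (\sum_k cost (xs k))%:E)%E.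
Proof.
move=> Hxs; apply: ge_ereal_sup => _ [t _ <-].
rewrite leeBlDr // -EFinD. apply: le_trans (@f_ub t xs Hxs) _.
by rewrite lee_fin big_split /= dot_sum.
Qed.

Lemma f_neg t (k0 : K) : ~~ nonneg t -> f t = -oo%E.
Proof.
by move=> Hn; rewrite /Defs.f (bigD1 k0) //= {1}/Defs.fk (negbTE Hn) addNye.
Qed.

Lemma fk_fine k t x : nonneg t -> Xk k x -> fk k t = (fine (fk k t))%:E.
Proof. by move=> Ht Hx; case: (@fk_fin k t x Ht Hx) => r [-> _]. Qed.

Lemma d_to_e (xs : K -> A -> R) t : (forall k, Xk k (xs k)) -> nonneg t ->
  f t = (\sum_k (cost (xs k) + dot t (restr (xs k))))%:E ->
  forall k, fk k t = (cost (xs k) + dot t (restr (xs k)))%:E.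
Proof.
move=> Hxs Ht Hf.
pose r k := fine (fk k t); pose v k := cost (xs k) + dot t (restr (xs k)).
have Hr k : fk k t = (r k)%:E by exact: (@fk_fine k t (xs k) Ht (Hxs k)).
have Hle k : 0 <= v k - r k.
  by rewrite subr_ge0 -lee_fin -Hr; exact: fk_ub.
have Hs : \sum_k (v k - r k) = 0.
  rewrite sumrB; apply/eqP; rewrite subr_eq0; apply/eqP.
  have : f t = (\sum_k r k)%:E by rewrite /Defs.f -sumEFin; apply: eq_bigr => k _; exact: Hr.
  by rewrite Hf => -[].
move=> k; rewrite Hr; congr (_%:E).
have := psumr_eq0P (P := predT) (fun k _ => Hle k) Hs (isT : predT k).
by move/eqP; rewrite subr_eq0 => /eqP.
Qed.

Lemma sum_mix (I T : finType) (F : I -> R) (h : I -> T) (Y : T -> R) :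
  \sum_u (\sum_i F i * (u == h i)%:R) * Y u = \sum_i F i * Y (h i).
Proof.
under eq_bigr => u _ do rewrite mulr_suml.
rewrite exchange_big; apply: eq_bigr => i _ /=.
rewrite -(sum_delta (h i) (fun u => F i * Y u)); apply: eq_bigr => u _; ring.
Qed.

Definition Tv := (tolled + (K * V))%type.
Definition Jc := (tolled + (K * A) + unit)%type.
Definition alJ (j : Jc) : R := if j is inr _ then 1 else 0.
Definition BJ (w : tolled -> R) (j : Jc) (u : Tv) : R :=
  match j with
  | inl (inl i) => - (u == inl i)%:R
  | inl (inr (k, a)) => (u == inr (k, head a))%:R - (u == inr (k, tail a))%:R
       - \sum_i (val i == a)%:R * (u == inl i)%:R
  | inr _ => \sum_i w i * (u == inl i)%:R - \sum_k 1 * (u == inr (k, d k))%:R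
       + \sum_k 1 * (u == inr (k, o k))%:R
  end.
Definition bJ (j : Jc) : R := if j is inl (inr (k, a)) then c a else 0.

Definition tY (Y : Tv -> R) : tolled -> R := fun i => Y (inl i).

Lemma satJ_iff w z (Y : Tv -> R) : @satJ R Tv Jc alJ (BJ w) bJ z Y <->
  [/\ nonneg (tY Y),
      forall k a, Y (inr (k, head a)) - Y (inr (k, tail a)) <= ell (tY Y) a &
      z <= \sum_k (Y (inr (k, d k)) - Y (inr (k, o k))) - dot (tY Y) w].
Proof.
have E1 i : \sum_u BJ w (inl (inl i)) u * Y u = - Y (inl i).
  rewrite /BJ; under eq_bigr => u _ do rewrite mulNr.
  by rewrite sumrN sum_delta.
have E2 k a : \sum_u BJ w (inl (inr (k, a))) u * Y u =
    Y (inr (k, head a)) - Y (inr (k, tail a)) - ttil (tY Y) a.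
  rewrite /BJ; under eq_bigr => u _ do rewrite !mulrBl.
  by rewrite !sumrB !sum_delta sum_mix.
have E3 : \sum_u BJ w (inr tt) u * Y u =
    dot (tY Y) w - \sum_k (Y (inr (k, d k)) - Y (inr (k, o k))).
  rewrite /BJ; under eq_bigr => u _ do rewrite mulrDl mulrBl.
  rewrite big_split sumrB /= !sum_mix sumrB /dot /tY.
  under [X in _ = X - _]eq_bigr => i _ do rewrite mulrC.
  have M1 (F : K -> R) : \sum_k 1 * F k = \sum_k F k by apply: eq_bigr => k _; rewrite mul1r.
  rewrite !M1 opprB addrA addrAC.
  by [].
split.
  move=> H; split.
  - apply/forallP => i; have := H (inl (inl i)).
    by rewrite E1 /alJ /bJ mul0r add0r oppr_le0.
  - move=> k a; have := H (inl (inr (k, a))).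
    rewrite E2 /alJ /bJ mul0r add0r /ell; lra.
  - have := H (inr tt); rewrite E3 /alJ /bJ mul1r; lra.
case=> /forallP H1 H2 H3 [[i|[k a]]|[]].
- by rewrite E1 /alJ /bJ mul0r add0r oppr_le0 H1.
- rewrite E2 /alJ /bJ mul0r add0r; have := H2 k a; rewrite /ell; lra.
- rewrite E3 /alJ /bJ mul1r; lra.
Qed.

Lemma f_fin_sum t (xs : K -> A -> R) : (forall k, Xk k (xs k)) -> nonneg t ->
  f t = (\sum_k fine (fk k t))%:E.
Proof.
move=> Hxs Ht; rewrite /Defs.f -sumEFin; apply: eq_bigr => k _.
exact: (@fk_fine k t (xs k) Ht (Hxs k)).
Qed.

Lemma core (xs : K -> A -> R) : (forall k, Xk k (xs k)) ->
  ((\sum_k cost (xs k))%:E = g (sum_restr xs))%E ->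
  exists t, nonneg t /\ forall k, fk k t = (cost (xs k) + dot t (restr (xs k)))%:E.
Proof.
move=> Hxs Hg.
case: (pickP (@predT K)) => [k0 _|noK]; last first.
  exists (fun _ => 0); split; first by apply/forallP.
  by move=> k; have := noK k.
set w := sum_restr xs; set Sc := \sum_k cost (xs k).
have [Y HY] : exists Y, @satJ R Tv Jc alJ (BJ w) bJ Sc Y.
  apply: attainJ.
  - move=> z Y /satJ_iff [Ht Hpi Hz].
    apply: (le_trans Hz).
    have : \sum_k (Y (inr (k, d k)) - Y (inr (k, o k))) <=
        Sc + dot (tY Y) w.
      rewrite /w -dot_sum /Sc -big_split; apply: ler_sum => k _.
      rewrite -lee_fin; apply: le_trans (@fk_ub k (tY Y) (xs k) (Hxs k)).
      exact: (@fk_pot k (tY Y) (fun v => Y (inr (k, v))) Ht (Hpi k)).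
    lra.
  - move=> e e0.
    have fin : g w \is a fin_num by rewrite -Hg.
    have [_ [t _ <-] Hlt0] := ub_ereal_sup_adherent e0 fin.
    have : (Sc%:E - e%:E < f t - (dot t w)%:E)%E by rewrite Hg; exact: Hlt0.
    case Ht: (nonneg t); last first.
      by rewrite f_neg ?Ht // addNye ltNge leNye.
    pose r k := fine (fk k t).
    have Hr k : fk k t = (r k)%:E := @fk_fine k t (xs k) Ht (Hxs k).
    have r0 k : 0 <= r k.
      by case: (@fk_fin k t (xs k) Ht (Hxs k)) => r' [E r'0]; rewrite /r E.
    have [P HP] := choice (fun k => @pot_exists k t (r k) Ht (Hr k) (r0 k)).
    pose Y (u : Tv) := match u with inl i => t i | inr (k, v) => P k v end.
    rewrite (@f_fin_sum t xs Hxs Ht) -EFinB lte_fin => Hlt.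
    exists (\sum_k r k - dot t w), Y; split => //.
    apply/satJ_iff; split.
    + exact: Ht.
    + by move=> k a; have [H1 _] := HP k; apply: H1.
    + rewrite lerD2r; apply: ler_sum => k _; by have [_ H2] := HP k.
have /satJ_iff [Ht Hpi Hz] := HY.
exists (tY Y); split => //; apply: d_to_e => //.
set t := tY Y.
pose r k := fine (fk k t).
have Hr k : fk k t = (r k)%:E := @fk_fine k t (xs k) Ht (Hxs k).
rewrite (@f_fin_sum t xs Hxs Ht); congr (_%:E); apply/eqP; rewrite eq_le; apply/andP; split.
  apply: ler_sum => k _; rewrite -lee_fin -Hr; exact: fk_ub.
apply: le_trans (_ : \sum_k (Y (inr (k, d k)) - Y (inr (k, o k))) <= _).
  suff -> : \sum_k (cost (xs k) + dot t (restr (xs k))) = Sc + dot t w by lra.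
  by rewrite big_split /= dot_sum.
apply: ler_sum => k _; rewrite -lee_fin -Hr.
exact: (@fk_pot k t (fun v => Y (inr (k, v))) Ht (Hpi k)).
Qed.

Local Notation indiv := (@indiv_bilevel_feasible R V A K tail head c A1 o d).

Lemma gk_ub k x : Xk k x -> (gk k (restr x) <= (cost x)%:E)%E.
Proof.
move=> Hx; apply: ge_ereal_sup => _ [t _ <-].
by rewrite leeBlDr // -EFinD; exact: fk_ub.
Qed.

Lemma gk_lb k x t : fk k t = (cost x + dot t (restr x))%:E ->
  ((cost x)%:E <= gk k (restr x))%E.
Proof.
move=> H; apply: ereal_sup_ubound; exists t => //.
by rewrite H -EFinB addrK.
Qed.

Lemma ind_of_e k x t : Xk k x -> fk k t = (cost x + dot t (restr x))%:E -> indiv k x.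
Proof.
move=> Hx H; split.
  move=> [t' z] /= He; rewrite /epi_neg_fk /= in He.
  have := @fk_ub k t' x Hx; rewrite -leeN2 => H2.
  have := le_trans H2 He; rewrite -EFinN lee_fin; lra.
exists (t, - cost x - dot t (restr x)); split => //.
by rewrite /epi_neg_fk /= H -EFinN opprD.
Qed.

Lemma gk_of_ind k x : Xk k x -> indiv k x -> gk k (restr x) = (cost x)%:E.
Proof.
move=> Hx [_ [[t z] [He /= Hz]]].
apply/le_anti; rewrite gk_ub //=; apply: (@gk_lb k x t).
apply/le_anti; rewrite fk_ub //=.
rewrite /epi_neg_fk /= Hz in He.
by rewrite -leeN2 -EFinN opprD.
Qed.

Lemma e_to_d (xs : K -> A -> R) t :
  (forall k, fk k t = (cost (xs k) + dot t (restr (xs k)))%:E) ->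
  f t = (\sum_k (cost (xs k) + dot t (restr (xs k))))%:E.
Proof. by move=> H; rewrite /Defs.f -sumEFin; apply: eq_bigr => k _. Qed.

Lemma d_to_b (xs : K -> A -> R) t : (forall k, Xk k (xs k)) ->
  f t = (\sum_k (cost (xs k) + dot t (restr (xs k))))%:E ->
  ((\sum_k cost (xs k))%:E = g (sum_restr xs))%E.
Proof.
move=> Hxs H; apply/le_anti; rewrite g_ub //= andbT.
apply: ereal_sup_ubound; exists t => //.
by rewrite H -EFinB big_split /= dot_sum addrK.
Qed.
End Net.


Theorem proposition5 (R : realType) (V A K : finType)
    (tail head : A -> V) (c : A -> R) (A1 : {set A}) (o d : K -> V)
    (Hsimple : injective (fun a => (tail a, head a)))
    (Hc : forall a, 0 <= c a)
    (HA1ne : exists a, a \in A1) (HA1proper : exists a, a \notin A1)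
    (Hod : forall k, o k != d k)
    (Hpath : forall k, exists p : seq A,
        walk tail head (o k) p (d k) && all (fun a => a \notin A1) p)
    (xs : K -> A -> R) (Hxs : forall k, @Xk R V A K tail head o d k (xs k)) :
  let f := @f R V A K tail head c A1 o d in
  let fk := @fk R V A K tail head c A1 o d in
  let g := @g R V A K tail head c A1 o d in
  let gk := @gk R V A K tail head c A1 o d in
  let cost := @cost R A c in
  let dot := @dot R A A1 in
  let restr := @restrA1 R A A1 in
  let w := @sum_restr R A K A1 xs in
  [<-> @bilevel_feasible R V A K tail head c A1 o d xs;
       ((\sum_(k : K) cost (xs k))%:E = g w)%E;
       (forall k, @indiv_bilevel_feasible R V A K tail head c A1 o d k (xs k)) /\
         (g w = \sum_(k : K) gk k (restr (xs k)))%E;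
       exists t : tolled A1 -> R, @nonneg R A A1 t /\
         f t = (\sum_(k : K) (cost (xs k) + dot t (restr (xs k))))%:E;
       exists t : tolled A1 -> R, @nonneg R A A1 t /\
         forall k, fk k t = (cost (xs k) + dot t (restr (xs k)))%:E].
Proof.
cbv zeta.
have core := @core R V A K tail head c A1 o d Hc xs Hxs.
tfae.
- by [].
- move=> Hb; have [t [Ht He]] := core Hb; split.
    by move=> k; apply: (@ind_of_e R V A K tail head c A1 o d k (xs k) t (Hxs k) (He k)).
  rewrite -Hb -sumEFin; apply: eq_bigr => k _; apply/le_anti/andP; split.
    exact: (@gk_lb R V A K tail head c A1 o d k (xs k) t (He k)).
  exact: (@gk_ub R V A K tail head c A1 o d k (xs k) (Hxs k)).
- move=> [Hind Hg].
  have Hb : ((\sum_k @cost R A c (xs k))%:E =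
     @g R V A K tail head c A1 o d (@sum_restr R A K A1 xs))%E.
    rewrite Hg -sumEFin; apply: eq_bigr => k _.
    by rewrite (@gk_of_ind R V A K tail head c A1 o d k (xs k) (Hxs k) (Hind k)).
  have [t [Ht He]] := core Hb; exists t; split => //.
  exact: (@e_to_d R V A K tail head c A1 o d xs t He).
- move=> [t [Ht Hf]]; exists t; split => //.
  exact: (@d_to_e R V A K tail head c A1 o d Hc xs t Hxs Ht Hf).
- move=> [t [Ht He]]; rewrite /bilevel_feasible.
  apply: (@d_to_b R V A K tail head c A1 o d xs t Hxs).
  exact: (@e_to_d R V A K tail head c A1 o d xs t He).
Qed.
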